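(* Let $T\in\mathbb{T}$. Then no non-pendant edge of $T$ belongs to a maximum matching of $T$.
   Context: $\mathbb{T}$ is the class of simple undirected weighted trees $T$ (nonzero real weights on edges) such that (i) $T$ has at least one non-pendant vertex, and (ii) every non-pendant vertex of $T$ is adjacent to at least one pendant vertex. A pendant vertex is a vertex of degree one; a pendant edge is an edge incident to a pendant vertex; a non-pendant edge is any other edge. A maximum matching is a set of pairwise vertex-disjoint edges of maximum cardinality. *)

(* Defs.v *)
From HB Require Import structures.
From mathcomp Require Import all_boot all_order all_algebra.
Set Implicit Arguments. Unset Strict Implicit. Unset Printing Implicit Defensive.
Import Order.TTheory GRing.Theory Num.Theory.

(* A simple undirected graph on a finite vertex type V is a symmetric,
   irreflexive relation e : rel V. Edges are represented as 2-element sets. *)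
Section Graphs.
Variable V : finType.
Variable e : rel V.

Definition simple_graph : Prop := symmetric e /\ irreflexive e.

Definition edges : {set {set V}} := [set [set x; y] | x in V, y in V & e x y].

Definition deg (x : V) : nat := #|[set y | e x y]|.

Definition pendant (x : V) : bool := deg x == 1%N.

Definition is_tree : Prop :=
  [/\ simple_graph, (0 < #|V|)%N,
      (forall x y : V, connect e x y) & #|edges| = #|V|.-1].

Definition matching (M : {set {set V}}) : Prop :=
  M \subset edges /\
  (forall f g, f \in M -> g \in M -> f != g -> [disjoint f & g]).

Definition maximum_matching (M : {set {set V}}) : Prop :=
  matching M /\ (forall M', matching M' -> (#|M'| <= #|M|)%N).

Definition non_pendant_edge (x y : V) : Prop :=
  e x y /\ ~~ pendant x /\ ~~ pendant y.

Definition in_class_T (R : numDomainType) (w : V -> V -> R) : Prop :=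
  [/\ is_tree,
      (forall x y, e x y -> w x y = w y x),
      (forall x y, e x y -> w x y != 0%R),
      (exists v, ~~ pendant v) &
      (forall v, ~~ pendant v -> exists2 u, e v u & pendant u)].
End Graphs.

(* Main.v *)
Require Import Defs.
From HB Require Import structures.
From mathcomp Require Import all_boot all_order all_algebra.
Set Implicit Arguments. Unset Strict Implicit.

Lemma pendant_uniq (V : finType) (e : rel V) (u a b : V) :
  pendant e u -> e u a -> e u b -> a = b.
Proof.
rewrite /pendant /deg => H1 ha hb; have [z Hz] := cards1P H1.
have : a \in [set y | e u y] by rewrite inE.
have : b \in [set y | e u y] by rewrite inE.
by rewrite Hz !inE => /eqP -> /eqP ->.
Qed.

Lemma disj2 (V : finType) (a b : V) (g : {set V}) :
  a \notin g -> b \notin g -> [disjoint [set a; b] & g].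
Proof.
move=> ha hb; apply/pred0P => z /=; rewrite !inE.
by case: eqP => [->|_]; [rewrite (negbTE ha) | case: eqP => [->|_]; rewrite ?(negbTE hb) ?andbF].
Qed.

Theorem theorem3p3 (V : finType) (e : rel V) (R : numDomainType)
    (w : V -> V -> R) :
  in_class_T e w ->
  forall M : {set {set V}}, maximum_matching e M ->
  forall x y : V, non_pendant_edge e x y -> [set x; y] \notin M.
Proof.
case=> [[[esym eirr] _ _ _] _ _ _ hpend] M [[Msub Mdis] Mmax] x y [exy [npx npy]].
have es : forall a b, e a b -> e b a by move=> a b; rewrite esym.
apply/negP => xyM.
have [u xu pu] := hpend x npx.
have [v yv pv] := hpend y npy.
have nxy : x != y by apply/eqP => exy'; move: exy; rewrite exy' eirr.
have nux : u != x by apply/eqP => h; move: xu; rewrite h eirr.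
have nvy : v != y by apply/eqP => h; move: yv; rewrite h eirr.
have nuy : u != y by apply/eqP => h; move: pu; rewrite h (negbTE npy).
have nvx : v != x by apply/eqP => h; move: pv; rewrite h (negbTE npx).
have nuv : u != v.
  apply/eqP => h; rewrite -h in yv.
  have := pendant_uniq pu (es _ _ xu) (es _ _ yv).
  by move/eqP; rewrite (negbTE nxy).
have inE2 : forall f, f \in edges e -> exists a b, f = [set a; b] /\ e a b.
  move=> f /imset2P [a b _]; rewrite inE => hab ->; by exists a, b.
have avoid : forall g, g \in M -> g != [set x; y] -> (x \notin g) && (y \notin g).
  move=> g gM ne; have := Mdis _ _ gM xyM ne => d.
  apply/andP; split; apply/negP => hg.
    by have := disjointFr d hg; rewrite !inE eqxx.
  by have := disjointFr d hg; rewrite !inE eqxx orbT.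
have unm : forall p q, pendant e p -> e q p -> p != x -> p != y -> q \in [set x; y] ->
    forall g, g \in M -> p \notin g.
  move=> p q pp qp px py qxy g gM; apply/negP => pg.
  have [a [b [gab eab]]] := inE2 g (subsetP Msub _ gM).
  have qg : q \in g.
    move: pg; rewrite gab !inE => /orP [] /eqP hp; subst p.
      by rewrite (pendant_uniq pp (es _ _ qp) eab) eqxx orbT.
    by rewrite (pendant_uniq pp (es _ _ qp) (es _ _ eab)) eqxx.
  case: (eqVneq g [set x; y]) => [gxy | ne].
    by move: pg; rewrite gxy !inE (negbTE px) (negbTE py).
  move/andP: (avoid g gM ne) => [hx hy].
  by move: qxy; rewrite !inE => /orP [] /eqP hq; subst q; [rewrite qg in hx | rewrite qg in hy].
have uM := unm u x pu xu nux nuy (setU11 _ _).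
have vM := unm v y pv yv nvx nvy (setU1r _ (set11 _)).
pose M' := [set u; x] |: ([set v; y] |: (M :\ [set x; y])).
have uxM : [set u; x] \notin [set v; y] |: (M :\ [set x; y]).
  rewrite !inE negb_or; apply/andP; split.
    apply/negP => /eqP h; have : u \in [set v; y] by rewrite -h !inE eqxx.
    by rewrite !inE (negbTE nuv) (negbTE nuy).
  rewrite negb_and; apply/orP; right; apply/negP => h.
  by move: (uM _ h); rewrite !inE eqxx.
have vyM : [set v; y] \notin (M :\ [set x; y]).
  rewrite !inE negb_and; apply/orP; right; apply/negP => h.
  by move: (vM _ h); rewrite !inE eqxx.
have cardM' : #|M'| = (#|M|).+1.
  rewrite /M' cardsU1 uxM cardsU1 vyM (cardsD1 [set x; y] M) xyM.
  by rewrite add1n add1n.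
have edge_in : forall a b, e a b -> [set a; b] \in edges e.
  by move=> a b hab; apply/imset2P; exists a b; rewrite ?inE.
have mM' : matching e M'.
  split.
    apply/subsetP => f; rewrite !inE => /orP [/eqP -> | /orP [/eqP -> | /andP [_ fM]]].
    - exact: edge_in (es _ _ xu).
    - exact: edge_in (es _ _ yv).
    - exact: subsetP Msub _ fM.
  have dux_vy : [disjoint [set u; x] & [set v; y]].
    by apply: disj2; rewrite !inE; apply/norP; split; rewrite // eq_sym.
  have dux_g : forall g, g \in M :\ [set x; y] -> [disjoint [set u; x] & g].
    move=> g; rewrite !inE => /andP [ne gM].
    by apply: disj2; [exact: uM | case/andP: (avoid g gM ne)].
  have dvy_g : forall g, g \in M :\ [set x; y] -> [disjoint [set v; y] & g].
    move=> g; rewrite !inE => /andP [ne gM].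
    by apply: disj2; [exact: vM | case/andP: (avoid g gM ne)].
  move=> f g; rewrite /M' !in_setU1.
  move=> /orP [/eqP -> | /orP [/eqP -> | fM]] /orP [/eqP -> | /orP [/eqP -> | gM]];
    rewrite ?eqxx // => ne.
  - by apply: dux_g.
  - by rewrite disjoint_sym.
  - by apply: dvy_g.
  - by rewrite disjoint_sym; apply: dux_g.
  - by rewrite disjoint_sym; apply: dvy_g.
  - move: fM gM; rewrite !inE => /andP [_ fM] /andP [_ gM].
    exact: (Mdis _ _ fM gM ne).
have := Mmax _ mM'; rewrite cardM'.
by rewrite ltnn.
Qed.
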